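(* Let $D$ be a distribution over $\mathcal{Z}$ and let $f:\mathbb{R}^d\times\mathcal{Z}\to\mathbb{R}$ be such that $f(\cdot;z)$ is convex and $L$-Lipschitz for every $z$. Fix $\eta>0$, $T\in\mathbb{N}$. Then there is a universal constant $C$ such that the GD iterates on the empirical risk and on the population risk satisfy \[ \forall t\in[T]:\quad \mathbb{E}_{S\sim D^n}\big[\|w_t^S-w_t^D\|\big]\le C\Big(\frac{\eta Lt}{\sqrt n}+\eta L\sqrt t\Big). \] (Explicitly, one may take $\mathbb{E}\|w_{t+1}^S-w_{t+1}^D\|\le \frac{4\eta L(t+1)}{\sqrt n}+4\eta L\sqrt{t+1}$.)
   Context: Empirical risk on $S=(z_1,\dots,z_n)$: $F_S(w)=\frac1n\sum_i f(w;z_i)$; population risk $F_D(w)=\mathbb{E}_{z\sim D}f(w;z)$. Fix a (measurable) subgradient selection $g(w;z)\in\partial_w f(w;z)$. GD on the sample: $w_0^S=0$, $w_{t+1}^S=w_t^S-\eta\frac1n\sum_{i=1}^n g(w_t^S;z_i)$. GD on the population: $w_0^D=0$, $w_{t+1}^D=w_t^D-\eta\,\mathbb{E}_{z\sim D}[g(w_t^D;z)]$. *)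

(* Defs.v *)
From HB Require Import structures.
From mathcomp Require Import all_boot all_order all_algebra.
From mathcomp Require Import all_classical all_reals all_analysis.
Set Implicit Arguments. Unset Strict Implicit. Unset Printing Implicit Defensive.
Import Order.TTheory GRing.Theory Num.Theory.
Local Open Scope classical_set_scope.
Local Open Scope ring_scope.

Section GDDefs.
Variable R : realType.
Variable d : nat.

Definition dotv (u v : 'rV[R]_d) : R := \sum_(j < d) u ord0 j * v ord0 j.
Definition normv (v : 'rV[R]_d) : R := Num.sqrt (dotv v v).

Definition convex_on_Rd (h : 'rV[R]_d -> R) : Prop :=
  forall (x y : 'rV[R]_d) (a : R), 0 <= a <= 1 ->
    h (a *: x + (1 - a) *: y) <= a * h x + (1 - a) * h y.

Definition lipschitz_Rd (L : R) (h : 'rV[R]_d -> R) : Prop :=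
  forall x y : 'rV[R]_d, `|h x - h y| <= L * normv (x - y).

Definition is_subgradient (h : 'rV[R]_d -> R) (w v : 'rV[R]_d) : Prop :=
  forall u : 'rV[R]_d, h w + dotv v (u - w) <= h u.

Fixpoint gd (G : 'rV[R]_d -> 'rV[R]_d) (eta : R) (t : nat) : 'rV[R]_d :=
  match t with
  | 0%N => 0
  | t'.+1 => let w := gd G eta t' in w - eta *: G w
  end.

Section WithZ.
Context (dZ : measure_display) (Z : measurableType dZ).

Definition emp_grad (n : nat) (g : 'rV[R]_d -> Z -> 'rV[R]_d) (S : 'I_n -> Z)
  (w : 'rV[R]_d) : 'rV[R]_d :=
  n%:R^-1 *: \sum_(i < n) g w (S i).

Definition pop_grad (D : probability Z R) (g : 'rV[R]_d -> Z -> 'rV[R]_d)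
  (w : 'rV[R]_d) : 'rV[R]_d :=
  \row_(j < d) Rintegral D setT (fun z => g w z ord0 j).

(* joint measurability of the selection (w,z) |-> g(w;z), expressed as:
   composing it with any measurable (w(.), z(.)) defined on any measurable
   space yields a measurable map (coordinatewise). *)
Definition measurable_selection (g : 'rV[R]_d -> Z -> 'rV[R]_d) : Prop :=
  forall (dO : measure_display) (O : measurableType dO)
         (h : O -> 'rV[R]_d) (zeta : O -> Z),
    (forall j : 'I_d, measurable_fun setT (fun o => h o ord0 j)) ->
    measurable_fun setT zeta ->
    forall j : 'I_d, measurable_fun setT (fun o => g (h o) (zeta o) ord0 j).

(* zs = (z_1,...,z_n) are i.i.d. random variables on (O,P), each with law D,
   i.e. the random sample S has law D^n. *)
Definition iid_sample (dO : measure_display) (O : measurableType dO)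
  (P : probability O R) (D : probability Z R) (n : nat) (zs : 'I_n -> O -> Z) : Prop :=
  [/\ (forall i, measurable_fun setT (zs i)),
      (forall i (A : set Z), measurable A -> P (zs i @^-1` A) = D A) &
      (forall A : 'I_n -> set Z, (forall i, measurable (A i)) ->
         P (\bigcap_(i in [set: 'I_n]) (zs i @^-1` A i)) =
         (\prod_(i < n) P (zs i @^-1` A i))%E)].
End WithZ.
End GDDefs.

(* Main.v *)
Require Import Defs.
From HB Require Import structures.
From mathcomp Require Import all_boot all_order all_algebra.
From mathcomp Require Import all_classical all_reals all_analysis.
From mathcomp Require Import ring lra measurable_realfun.
Import Order.TTheory GRing.Theory Num.Theory.
Local Open Scope classical_set_scope.
Local Open Scope ring_scope.


Section Vec.
Context {R : realType} {d : nat}.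
Implicit Types u v w : 'rV[R]_d.

Lemma dotvC u v : dotv u v = dotv v u.
Proof. by apply: eq_bigr => j _; rewrite mulrC. Qed.

Lemma dotvDl u v w : dotv (u + v) w = dotv u w + dotv v w.
Proof. by rewrite /dotv -big_split; apply: eq_bigr => j _; rewrite mxE mulrDl. Qed.

Lemma dotvZl (k : R) u w : dotv (k *: u) w = k * dotv u w.
Proof. by rewrite /dotv mulr_sumr; apply: eq_bigr => j _; rewrite mxE mulrA. Qed.

Lemma dotvNl u w : dotv (- u) w = - dotv u w.
Proof. by rewrite -scaleN1r dotvZl mulN1r. Qed.

Lemma dotvBl u v w : dotv (u - v) w = dotv u w - dotv v w.
Proof. by rewrite dotvDl dotvNl. Qed.

Lemma dotvDr u v w : dotv w (u + v) = dotv w u + dotv w v.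
Proof. by rewrite dotvC dotvDl !(dotvC w). Qed.

Lemma dotvZr (k : R) u w : dotv w (k *: u) = k * dotv w u.
Proof. by rewrite dotvC dotvZl dotvC. Qed.

Lemma dotvBr u v w : dotv w (u - v) = dotv w u - dotv w v.
Proof. by rewrite dotvC dotvBl !(dotvC w). Qed.

Lemma dotv_suml I (r : seq I) (P : pred I) (F : I -> 'rV[R]_d) w :
  dotv (\sum_(i <- r | P i) F i) w = \sum_(i <- r | P i) dotv (F i) w.
Proof.
elim/big_rec2: _ => [|i y1 y2 _ <-]; last by rewrite dotvDl.
by rewrite /dotv big1 // => j _; rewrite mxE mul0r.
Qed.

Lemma dotvvge0 u : 0 <= dotv u u.
Proof. by apply: sumr_ge0 => j _; rewrite -expr2 sqr_ge0. Qed.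

Lemma normv_ge0 u : 0 <= normv u.
Proof. exact: sqrtr_ge0. Qed.

Lemma normv_sqr u : normv u ^+ 2 = dotv u u.
Proof. by rewrite /normv sqr_sqrtr // dotvvge0. Qed.

Lemma dotv0l w : dotv 0 w = 0.
Proof. by rewrite /dotv big1 // => j _; rewrite mxE mul0r. Qed.

Lemma dotvv_eq0 u : dotv u u = 0 -> u = 0.
Proof.
move=> h; apply/rowP => j; rewrite mxE.
have H : forall i : 'I_d, true -> 0 <= u ord0 i * u ord0 i.
  by move=> i _; rewrite -expr2 sqr_ge0.
have := @psumr_eq0P _ _ xpredT (fun j => u ord0 j * u ord0 j) H h.
by move=> /(_ j isT) /eqP; rewrite mulf_eq0 orbb => /eqP ->.
Qed.

Lemma CS u v : dotv u v ^+ 2 <= dotv u u * dotv v v.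
Proof.
set a := dotv u u; set b := dotv v v; set c := dotv u v.
have [b0|bpos] := eqVneq b 0.
  rewrite /c (dotvv_eq0 _ b0) dotvC dotv0l expr0n /=.
  by rewrite mulr_ge0 // /a /b dotvvge0.
have bge : 0 < b by rewrite lt_def bpos dotvvge0.
have := dotvvge0 (b *: u - c *: v).
rewrite dotvBl !dotvBr !dotvZl !dotvZr -/a -/b -/c (dotvC v u) -/c.
have -> : b * (b * a) - b * (c * c) - (c * (b * c) - c * (c * b)) =
  b * (a * b - c ^+ 2) by ring.
by rewrite pmulr_rge0 // subr_ge0 mulrC.
Qed.

Lemma CS' u v : dotv u v <= normv u * normv v.
Proof.
rewrite /normv -sqrtrM ?dotvvge0 //.
apply: le_trans (ler_norm _) _.
by rewrite -sqrtr_sqr ler_wsqrtr // CS.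
Qed.

Lemma normvD u v : normv (u + v) <= normv u + normv v.
Proof.
rewrite -(ler_pXn2r (n := 2)) // ?nnegrE ?addr_ge0 ?normv_ge0 //.
rewrite normv_sqr dotvDl !dotvDr sqrrD !normv_sqr (dotvC v u).
have := CS' u v; lra.
Qed.

Lemma normvZ (k : R) u : normv (k *: u) = `|k| * normv u.
Proof.
by rewrite /normv dotvZl dotvZr mulrA -expr2 sqrtrM ?sqr_ge0 // sqrtr_sqr.
Qed.

Lemma normvN u : normv (- u) = normv u.
Proof. by rewrite -scaleN1r normvZ normrN1 mul1r. Qed.

Lemma normvB u v : normv (u - v) <= normv u + normv v.
Proof. by rewrite -(normvN v) normvD. Qed.

Lemma normv_sum I (r : seq I) (P : pred I) (F : I -> 'rV[R]_d) :
  normv (\sum_(i <- r | P i) F i) <= \sum_(i <- r | P i) normv (F i).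
Proof.
elim/big_rec2: _ => [|i y1 y2 _ h].
  by rewrite /normv dotv0l sqrtr0.
by apply: le_trans (normvD _ _) _; rewrite lerD2l.
Qed.

Lemma normv0 : normv (0 : 'rV[R]_d) = 0.
Proof. by rewrite /normv dotv0l sqrtr0. Qed.

End Vec.


Section Det.
Context {R : realType} {d : nat}.
Implicit Types u v w : 'rV[R]_d.

Lemma subgrad_norm (h : 'rV[R]_d -> R) (L : R) w v : 0 <= L ->
  lipschitz_Rd L h -> is_subgradient h w v -> normv v <= L.
Proof.
move=> L0 hL hs.
have := hs (w + v); rewrite addrAC subrr add0r => h1.
have := hL (w + v) w; rewrite addrAC subrr add0r => h2.
have h3 : normv v ^+ 2 <= L * normv v.
  rewrite normv_sqr; apply: le_trans h2; apply: le_trans (ler_norm _).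
  by rewrite lerBrDl.
have [n0|npos] := eqVneq (normv v) 0; first by rewrite n0.
have np : 0 < normv v by rewrite lt_def npos normv_ge0.
by move: h3; rewrite expr2 ler_pM2r.
Qed.

Lemma subgrad_mono (h : 'rV[R]_d -> R) a b ga gb :
  is_subgradient h a ga -> is_subgradient h b gb -> 0 <= dotv (ga - gb) (a - b).
Proof.
move=> ha hb; have := ha b; have := hb a.
rewrite !dotvBr !dotvBl => h1 h2.
lra.
Qed.

Lemma normvZp (k : R) u : 0 <= k -> normv (k *: u) = k * normv u.
Proof. by move=> k0; rewrite normvZ ger0_norm. Qed.

Lemma gd_diff (GS GD : 'rV[R]_d -> 'rV[R]_d) (eta L : R) (t : nat) :
  0 < eta -> 0 <= L -> (forall w, normv (GS w) <= L) ->
  (forall a b, 0 <= dotv (GS a - GS b) (a - b)) ->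
  normv (gd GS eta t - gd GD eta t) <=
    2 * eta * L * Num.sqrt t%:R +
    eta * \sum_(s < t) normv (GS (gd GD eta s) - GD (gd GD eta s)).
Proof.
move=> eta0 L0 hN hM.
elim: t => [|t IH].
  by rewrite /= subrr normv0 big_ord0 sqrtr0 !mulr0 addr0.
set c := 2 * eta * L.
have c0 : 0 <= c by rewrite /c !mulr_ge0 // ltW.
set E := eta * \sum_(s < t) normv (GS (gd GD eta s) - GD (gd GD eta s)).
have E0 : 0 <= E.
  by apply: mulr_ge0; [exact: ltW|apply: sumr_ge0 => s _; exact: normv_ge0].
rewrite big_ord_recr /= mulrDr addrA.
set a := gd GS eta t; set b := gd GD eta t.
set e := GS b - GD b.
set Dl := GS a - GS b.
have -> : a - eta *: GS a - (b - eta *: GD b) =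
    ((a - b) - eta *: Dl) - eta *: e.
  by apply/rowP => j; rewrite /Dl /e !mxE; ring.
apply: (le_trans (normvB _ _)).
rewrite (normvZp _ _ (ltW eta0)) lerD2r.
have hD : normv Dl <= 2 * L.
  by apply: le_trans (normvB _ _) _; rewrite mulr2n mulrDl mul1r lerD.
have hA : dotv (a - b - eta *: Dl) (a - b - eta *: Dl) <=
          normv (a - b) ^+ 2 + c ^+ 2.
  have hm := hM a b; rewrite -/Dl in hm.
  move: hm; set del := a - b => hm; clearbody del.
  rewrite dotvBl !dotvBr !dotvZl !dotvZr (dotvC del Dl) normv_sqr.
  have h1 : dotv Dl Dl <= (2 * L) ^+ 2.
    by rewrite -normv_sqr lerXn2r ?nnegrE ?normv_ge0 ?mulr_ge0.
  have h2 : eta * (eta * dotv Dl Dl) <= eta ^+ 2 * (2 * L) ^+ 2.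
    by rewrite mulrA -expr2 ler_wpM2l // sqr_ge0.
  have h3 : 0 <= eta * dotv Dl del by rewrite mulr_ge0 // ltW.
  rewrite /c exprMn; lra.
pose st : R := Num.sqrt t%:R; pose st1 : R := Num.sqrt t.+1%:R.
have hIH : normv (a - b) <= c * st + E by [].
rewrite -/st1.
have st0 : 0 <= st by exact: sqrtr_ge0.
have hst : st ^+ 2 = t%:R by rewrite sqr_sqrtr.
have hst1 : st1 ^+ 2 = t%:R + 1 by rewrite sqr_sqrtr // -natr1.
have stle : st <= st1 by rewrite ler_wsqrtr // ler_nat.
have y0 : 0 <= c * st1 + E by rewrite addr_ge0 // mulr_ge0 // sqrtr_ge0.
rewrite /normv -(ger0_norm y0) -sqrtr_sqr; apply: ler_wsqrtr.
apply: le_trans hA _.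
have n0 := normv_ge0 (a - b).
have h4 : normv (a - b) ^+ 2 <= (c * st + E) ^+ 2.
  by rewrite !expr2; apply: ler_pM.
have h5 : c * E * st <= c * E * st1 by rewrite ler_wpM2l // mulr_ge0.
have : (c * st + E) ^+ 2 + c ^+ 2 <= (c * st1 + E) ^+ 2.
  rewrite !sqrrD !exprMn hst hst1; lra.
lra.
Qed.

Section Emp.
Context (dZ : measure_display) (Z : measurableType dZ).

Lemma emp_norm (n : nat) (g : 'rV[R]_d -> Z -> 'rV[R]_d) (S : 'I_n -> Z) w L :
  0 <= L -> (forall w z, normv (g w z) <= L) -> normv (emp_grad g S w) <= L.
Proof.
move=> L0 hg; rewrite /emp_grad normvZp ?invr_ge0 ?ler0n //.
case: n S => [|n] S; first by rewrite invr0 mul0r.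
apply: le_trans (_ : n.+1%:R^-1 * \sum_(i < n.+1) L <= L).
  by rewrite ler_wpM2l ?invr_ge0 ?ler0n //; apply: le_trans (normv_sum _ _ _ _) _; apply: ler_sum => i _; exact: hg.
by rewrite sumr_const card_ord -(mulr_natl L) mulrA mulVf ?pnatr_eq0 // mul1r.
Qed.

Lemma emp_mono (n : nat) (g : 'rV[R]_d -> Z -> 'rV[R]_d) (S : 'I_n -> Z) :
  (forall z a b, 0 <= dotv (g a z - g b z) (a - b)) ->
  forall a b, 0 <= dotv (emp_grad g S a - emp_grad g S b) (a - b).
Proof.
move=> hg a b; rewrite /emp_grad -scalerBr -sumrB dotvZl dotv_suml.
by rewrite mulr_ge0 ?invr_ge0 ?ler0n //; apply: sumr_ge0 => i _.
Qed.

End Emp.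
End Det.


Section IntHelp.
Context {R : realType} {dT : measure_display} {T : measurableType dT}.
Variable mu : probability T R.

Definition BM (f : T -> R) :=
  measurable_fun setT f /\ exists M, forall x, `|f x| <= M.

Lemma BM_int f : BM f -> mu.-integrable setT (EFin \o f).
Proof.
move=> [mf [M hM]]; apply: measurable_bounded_integrable => //.
  by rewrite -ge0_fin_numE // fin_num_measure.
exists M; split; first by rewrite num_real.
by move=> y /ltW My x _; exact: le_trans (hM x) My.
Qed.

Lemma fine_muT : fine (mu setT) = 1.
Proof. exact: (congr1 fine (probability_setT mu)). Qed.

Lemma BM_cst (c : R) : BM (fun _ => c).
Proof. by split; [exact: measurable_cst|exists `|c|]. Qed.

Lemma BM_D f g : BM f -> BM g -> BM (fun x => f x + g x).
Proof.
move=> [mf [M hM]] [mg [N hN]]; split; first exact: measurable_funD.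
by exists (M + N) => x; apply: le_trans (ler_normD _ _) _; apply: lerD.
Qed.

Lemma BM_N f : BM f -> BM (fun x => - f x).
Proof.
move=> [mf [M hM]]; split; first exact: measurable_funN.
by exists M => x; rewrite normrN.
Qed.

Lemma BM_B f g : BM f -> BM g -> BM (fun x => f x - g x).
Proof. by move=> hf hg; apply: BM_D => //; exact: BM_N. Qed.

Lemma BM_M f g : BM f -> BM g -> BM (fun x => f x * g x).
Proof.
move=> [mf [M hM]] [mg [N hN]]; split; first exact: measurable_funM.
exists (M * N) => x; rewrite normrM; apply: ler_pM => //.
Qed.

Lemma BM_sum I (r : seq I) (F : I -> T -> R) :
  (forall i, BM (F i)) -> BM (fun x => \sum_(i <- r) F i x).
Proof.
move=> hF; elim: r => [|i r [mr [M hM]]].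
  by under eq_fun do rewrite big_nil; exact: BM_cst.
under eq_fun do rewrite big_cons.
exact: BM_D (hF i) (conj mr (ex_intro _ M hM)).
Qed.

Lemma Rint_sum I (r : seq I) (F : I -> T -> R) :
  (forall i, BM (F i)) ->
  \int[mu]_x (\sum_(i <- r) F i x) = \sum_(i <- r) \int[mu]_x F i x.
Proof.
move=> hF; elim: r => [|i r IH].
  rewrite big_nil; under eq_fun do rewrite big_nil.
  by rewrite Rintegral_cst // fine_muT mul0r.
rewrite big_cons -IH; under eq_fun do rewrite big_cons.
rewrite RintegralD //; first exact: BM_int.
exact/BM_int/BM_sum.
Qed.

Lemma Rint_cst (c : R) : \int[mu]_x c = c.
Proof. by rewrite Rintegral_cst // fine_muT mulr1. Qed.

Lemma Rint_D f g : BM f -> BM g ->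
  \int[mu]_x (f x + g x) = \int[mu]_x f x + \int[mu]_x g x.
Proof. by move=> hf hg; rewrite RintegralD //; exact: BM_int. Qed.

Lemma Rint_B f g : BM f -> BM g ->
  \int[mu]_x (f x - g x) = \int[mu]_x f x - \int[mu]_x g x.
Proof. by move=> hf hg; rewrite RintegralB //; exact: BM_int. Qed.

Lemma Rint_Zl (k : R) f : BM f -> \int[mu]_x (k * f x) = k * \int[mu]_x f x.
Proof. by move=> hf; rewrite RintegralZl //; exact: BM_int. Qed.

Lemma Rint_le f g : BM f -> BM g -> (forall x, f x <= g x) ->
  \int[mu]_x f x <= \int[mu]_x g x.
Proof. by move=> hf hg fg; apply: le_Rintegral => //; exact: BM_int. Qed.

End IntHelp.


Lemma BM_comp {R : realType} {d1 d2} {T1 : measurableType d1} {T2 : measurableType d2}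
  (phi : T2 -> R) (z : T1 -> T2) :
  BM phi -> measurable_fun setT z -> BM (fun x => phi (z x)).
Proof.
move=> [mp [M hM]] mz; split; first exact: measurableT_comp.
by exists M.
Qed.

Lemma Rint_EFin {R : realType} {dT} {T : measurableType dT} (mu : probability T R)
  (f : T -> R) : BM f -> (\int[mu]_x (f x)%:E)%E = (\int[mu]_x f x)%:E.
Proof. by move=> hf; rewrite /Rintegral fineK // integrable_fin_num //; exact: BM_int. Qed.

Section Indep.
Context {R : realType} {dZ : measure_display} {Z : measurableType dZ}
  (D : probability Z R) {dO : measure_display} {O : measurableType dO}
  (P : probability O R) (n : nat) (zs : 'I_n -> O -> Z).
Hypothesis Hiid : iid_sample P D zs.

Lemma mzs i : measurable_fun setT (zs i).
Proof. by case: Hiid. Qed.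

Lemma pushE i (phi : Z -> R) : BM phi ->
  \int[P]_o phi (zs i o) = \int[D]_z phi z.
Proof.
move=> hphi; rewrite /Rintegral; congr fine.
have hc : BM (fun o => phi (zs i o)) by apply: BM_comp => //; exact: mzs.
transitivity (\int[pushforward P (zs i)]_z (phi z)%:E)%E.
  rewrite integral_pushforward //.
  - exact: mzs.
  - by case: hphi => mp _; exact/measurable_EFinP.
  - by rewrite preimage_setT; exact: (BM_int P _ hc).
apply: eq_measure_integral => [|mf A mA _]; first exact: mzs.
by case: Hiid => _ h _; exact: h.
Qed.

Lemma rectE i k (A B : set Z) : i != k -> measurable A -> measurable B ->
  P ((fun o => (zs i o, zs k o)) @^-1` (A `*` B)) = (D A * D B)%E.
Proof.
move=> ik mA mB.
case: Hiid => _ h1 h3.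
pose Af := fun l : 'I_n => if l == i then A else if l == k then B else setT.
have mAf : forall l, measurable (Af l).
  by move=> l; rewrite /Af; case: ifP => _ //; case: ifP.
have := h3 Af mAf.
have -> : \bigcap_(l in [set: 'I_n]) (zs l @^-1` Af l) =
    (fun o => (zs i o, zs k o)) @^-1` (A `*` B).
  apply/seteqP; split.
    move=> o /= H; split.
      by have := H i I; rewrite /Af eqxx.
    by have := H k I; rewrite /Af eq_sym (negbTE ik) eqxx.
  move=> o /= [HA HB] l _.
  rewrite /Af /=; case: ifP => [/eqP -> //|_]; case: ifP => [/eqP -> //|_] //.
move=> ->.
rewrite (bigD1 i) //= (bigD1 k) 1?eq_sym //=.
rewrite big1 ?mule1.
  by rewrite /Af eqxx eq_sym (negbTE ik) eqxx h1 // h1.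
move=> l /andP [li lk]; rewrite /Af (negbTE li) (negbTE lk) preimage_setT.
exact: probability_setT.
Qed.

Lemma prodE i k (phi psi : Z -> R) : i != k -> BM phi -> BM psi ->
  \int[P]_o (phi (zs i o) * psi (zs k o)) = \int[D]_z phi z * \int[D]_z psi z.
Proof.
move=> ik hphi hpsi.
pose p := fun o => (zs i o, zs k o).
have mp : measurable_fun setT p by apply: measurable_fun_pair; exact: mzs.
pose F := fun xy : Z * Z => phi xy.1 * psi xy.2.
have hF : BM F.
  case: hphi => mphi [M hM]; case: hpsi => mpsi [N hN]; split.
    apply: measurable_funM.
      exact: (measurableT_comp mphi measurable_fst).
    exact: (measurableT_comp mpsi measurable_snd).
  by exists (M * N) => x; rewrite /F normrM; apply: ler_pM.
have hFp : BM (fun o => F (p o)) by exact: BM_comp.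
suff E : (\int[P]_o (F (p o))%:E = (\int[D]_z phi z * \int[D]_z psi z)%:E)%E.
  by rewrite /Rintegral E.
transitivity (\int[pushforward P p]_z (F z)%:E)%E.
  rewrite integral_pushforward //.
  - by case: hF => mF _; exact/measurable_EFinP.
  - by rewrite preimage_setT; exact: (BM_int P _ hFp).
transitivity (\int[D \x D]_z (F z)%:E)%E.
  apply: eq_measure_integral => A mA _.
  symmetry; apply: product_measure_unique => //.
  by move=> A1 B1 mA1 mB1; exact: rectE.
rewrite -integral12_prod_meas1; last exact: (BM_int (D \x D)%E _ hF).
rewrite /fubini_F /=.
transitivity (\int[D]_x (phi x * \int[D]_z psi z)%:E)%E.
  apply: eq_integral => x _.
  rewrite (Rint_EFin D (fun y => phi x * psi y)); last first.
    by apply: BM_M; [exact: BM_cst|].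
  by rewrite Rint_Zl.
rewrite (Rint_EFin D (fun x => phi x * \int[D]_z psi z)); last first.
  by apply: BM_M => //; exact: BM_cst.
rewrite (_ : (fun x => phi x * \int[D]_z psi z) = (fun x => \int[D]_z psi z * phi x)).
  by rewrite Rint_Zl // mulrC.
by apply/funext => x; rewrite mulrC.
Qed.

End Indep.
Arguments mzs {R dZ Z D dO O P n zs} Hiid i.
Arguments pushE {R dZ Z D dO O P n zs} Hiid i phi.
Arguments prodE {R dZ Z D dO O P n zs} Hiid i k phi psi.
Arguments rectE {R dZ Z D dO O P n zs} Hiid i k A B.


Lemma coord_le {R : realType} {d : nat} (v : 'rV[R]_d) j : `|v ord0 j| <= normv v.
Proof.
rewrite -sqrtr_sqr; apply: ler_wsqrtr; rewrite /dotv (bigD1 j) //= expr2 lerDl.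
by apply: sumr_ge0 => k _; rewrite -expr2 sqr_ge0.
Qed.

Section Var.
Context {R : realType} {d : nat} {dZ : measure_display} {Z : measurableType dZ}
  (D : probability Z R) {dO : measure_display} {O : measurableType dO}
  (P : probability O R) (n : nat) (zs : 'I_n -> O -> Z).
Hypothesis Hiid : iid_sample P D zs.
Hypothesis n0 : (0 < n)%N.
Variable h : Z -> 'rV[R]_d.
Variable L : R.
Hypothesis L0 : 0 <= L.
Hypothesis hL : forall z, normv (h z) <= L.
Hypothesis hm : forall j, measurable_fun setT (fun z => h z ord0 j).

Let hj j := fun z => h z ord0 j.
Let mu j := \int[D]_z hj j z.
Let U i j := fun o => hj j (zs i o) - mu j.

Lemma BM_hj j : BM (hj j).
Proof. split; first exact: hm. by exists L => z; apply: le_trans (coord_le _ _) (hL z). Qed.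

Lemma BM_U i j : BM (U i j).
Proof. apply: BM_B; last exact: BM_cst. apply: BM_comp; first exact: BM_hj. exact: (mzs Hiid). Qed.

Lemma Rint_hj_mu j : \int[D]_z (hj j z - mu j) = 0.
Proof. by rewrite Rint_B ?Rint_cst ?subrr //; [exact: BM_hj|exact: BM_cst]. Qed.

Lemma cross i k j : i != k -> \int[P]_o (U i j o * U k j o) = 0.
Proof.
move=> ik.
rewrite (prodE Hiid i k (fun z => hj j z - mu j) (fun z => hj j z - mu j)) //.
- by rewrite Rint_hj_mu mul0r.
- by apply: BM_B; [exact: BM_hj|exact: BM_cst].
- by apply: BM_B; [exact: BM_hj|exact: BM_cst].
Qed.

Lemma diag i j : \int[P]_o (U i j o * U i j o) <= \int[D]_z (hj j z * hj j z).
Proof.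
have hB : BM (fun z => (hj j z - mu j) * (hj j z - mu j)).
  by apply: BM_M; apply: BM_B; [exact: BM_hj|exact: BM_cst|exact: BM_hj|exact: BM_cst].
rewrite (pushE Hiid i (fun z => (hj j z - mu j) * (hj j z - mu j))) //.
have hh : BM (fun z => hj j z * hj j z) by apply: BM_M; exact: BM_hj.
have h2 : BM (fun z => mu j * (2 * hj j z - mu j)).
  apply: BM_M; first exact: BM_cst.
  apply: BM_B; last exact: BM_cst.
  by apply: BM_M; [exact: BM_cst|exact: BM_hj].
rewrite (_ : (fun z => (hj j z - mu j) * (hj j z - mu j)) =
             (fun z => hj j z * hj j z - mu j * (2 * hj j z - mu j))); last first.
  by apply/funext => z; ring.
rewrite Rint_B // Rint_Zl; last first.
  apply: BM_B; last exact: BM_cst.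
  by apply: BM_M; [exact: BM_cst|exact: BM_hj].
rewrite Rint_B; [|by apply: BM_M; [exact: BM_cst|exact: BM_hj]|exact: BM_cst].
rewrite Rint_Zl; last exact: BM_hj.
rewrite Rint_cst -/(mu j).
have : 0 <= mu j ^+ 2 by exact: sqr_ge0.
lra.
Qed.

Let e o := n%:R^-1 *: \sum_(i < n) h (zs i o) - \row_(j < d) mu j.
Let c : R := n%:R^-1 * n%:R^-1.

Lemma nR0 : n%:R != 0 :> R.
Proof. by rewrite pnatr_eq0 -lt0n. Qed.

Lemma e_coord o j : e o ord0 j = n%:R^-1 * \sum_(i < n) U i j o.
Proof.
rewrite /e /U !mxE summxE sumrB sumr_const card_ord.
by rewrite -[mu j *+ n]mulr_natl mulrBr mulrA mulVf ?nR0 // mul1r.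
Qed.

Lemma dot_e o : dotv (e o) (e o) =
  \sum_(j < d) \sum_(i < n) \sum_(k < n) c * (U i j o * U k j o).
Proof.
apply: eq_bigr => j _; rewrite e_coord mulrACA mulr_suml mulr_sumr.
by apply: eq_bigr => i _; rewrite !mulr_sumr.
Qed.

Lemma BM_dot : BM (fun o => dotv (e o) (e o)).
Proof.
rewrite (_ : (fun o => _) = (fun o => \sum_(j < d) \sum_(i < n) \sum_(k < n) c * (U i j o * U k j o))); last by apply/funext => o; exact: dot_e.
do 3 (apply: BM_sum => ?).
by apply: BM_M; [exact: BM_cst|apply: BM_M; exact: BM_U].
Qed.

Lemma inner j : \int[P]_o (\sum_(i < n) \sum_(k < n) c * (U i j o * U k j o)) <=
  c * \sum_(i < n) \int[D]_z (hj j z * hj j z).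
Proof.
have hBU : forall i k, BM (fun o => c * (U i j o * U k j o)).
  by move=> i k; apply: BM_M; [exact: BM_cst|apply: BM_M; exact: BM_U].
rewrite Rint_sum; last by move=> i; apply: BM_sum.
rewrite mulr_sumr; apply: ler_sum => i _.
rewrite Rint_sum // (bigD1 i) //= big1 ?addr0.
  rewrite Rint_Zl; last by apply: BM_M; exact: BM_U.
  by rewrite ler_wpM2l ?mulr_ge0 ?invr_ge0 ?ler0n //; exact: diag.
move=> k ki; rewrite Rint_Zl; last by apply: BM_M; exact: BM_U.
by rewrite cross ?mulr0 // eq_sym.
Qed.
Lemma Rint_dot : \int[P]_o dotv (e o) (e o) <= L ^+ 2 / n%:R.
Proof.
rewrite (_ : (fun o => _) = (fun o => \sum_(j < d) \sum_(i < n) \sum_(k < n) c * (U i j o * U k j o))); last by apply/funext => o; exact: dot_e.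
have hBU : forall i k j, BM (fun o => c * (U i j o * U k j o)).
  by move=> i k j; apply: BM_M; [exact: BM_cst|apply: BM_M; exact: BM_U].
rewrite Rint_sum; last by move=> j; apply: BM_sum => i; apply: BM_sum.
apply: le_trans (_ : \sum_(j < d) c * \sum_(i < n) \int[D]_z (hj j z * hj j z) <= _).
  by apply: ler_sum => j _; exact: inner.
have hhj : forall j, BM (fun z => hj j z * hj j z) by move=> j; apply: BM_M; exact: BM_hj.
have -> : \sum_(j < d) c * \sum_(i < n) \int[D]_z (hj j z * hj j z) =
    n%:R^-1 * \sum_(j < d) \int[D]_z (hj j z * hj j z).
  rewrite mulr_sumr; apply: eq_bigr => j _; rewrite sumr_const card_ord -mulr_natl /c.
  by field; exact: nR0.
rewrite -Rint_sum // mulrC ler_wpM2r ?invr_ge0 ?ler0n //.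
apply: le_trans (_ : \int[D]_z (L ^+ 2) <= _); last by rewrite Rint_cst.
apply: Rint_le; [exact: BM_sum|exact: BM_cst|move=> z].
rewrite (_ : \sum_(j < d) _ = dotv (h z) (h z)) // -normv_sqr !expr2.
by apply: ler_pM; rewrite ?normv_ge0.
Qed.

Lemma BM_norm_e : BM (fun o => normv (e o)).
Proof.
split.
  rewrite /normv; apply: (measurableT_comp (continuous_measurable_fun (@sqrt_continuous R))).
  by case: BM_dot.
exists (L + normv (\row_(j < d) mu j)) => o.
rewrite ger0_norm ?normv_ge0 //; apply: le_trans (normvB _ _) _; rewrite lerD2r.
exact: (@emp_norm _ _ _ Z n (fun _ => h) (fun i => zs i o) 0 L L0 (fun _ => hL)).
Qed.

Lemma err_bound : \int[P]_o normv (e o) <= L / Num.sqrt n%:R.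
Proof.
set K := L / Num.sqrt n%:R.
have sn : 0 < Num.sqrt n%:R :> R by rewrite sqrtr_gt0 ltr0n.
have K0 : 0 <= K by rewrite /K divr_ge0 // ltW.
have hK2 : L ^+ 2 / n%:R = K ^+ 2.
  by rewrite /K expr_div_n sqr_sqrtr ?ler0n.
have key : forall a, 0 < a -> \int[P]_o normv (e o) <= K ^+ 2 / (2 * a) + a / 2.
  move=> a a0.
  have a2 : 0 < 2 * a by rewrite mulr_gt0.
  apply: le_trans (_ : \int[P]_o ((2 * a)^-1 * dotv (e o) (e o) + a / 2) <= _).
    apply: Rint_le; [exact: BM_norm_e| |].
      by apply: BM_D; [apply: BM_M; [exact: BM_cst|exact: BM_dot]|exact: BM_cst].
    move=> o; rewrite -normv_sqr; set x := normv (e o).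
    have -> : (2 * a)^-1 * x ^+ 2 + a / 2 = (x ^+ 2 + a ^+ 2) / (2 * a).
      by field; rewrite gt_eqF.
    rewrite ler_pdivlMr //.
    have := sqr_ge0 (x - a); rewrite sqrrB; lra.
  rewrite Rint_D; [|apply: BM_M; [exact: BM_cst|exact: BM_dot]|exact: BM_cst].
  rewrite Rint_Zl; last exact: BM_dot.
  rewrite Rint_cst lerD2r -hK2 mulrC; apply: ler_wpM2r.
    by rewrite invr_ge0 ltW.
  exact: Rint_dot.
have [K00|Kn0] := eqVneq K 0.
  rewrite K00; apply/ler_addgt0Pr => eps eps0.
  have := key (2 * eps) (mulr_gt0 (ltr0Sn _ 1) eps0).
  rewrite K00 expr0n /= mul0r add0r add0r.
  by rewrite (mulrC 2 eps) mulfK.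
have Kp : 0 < K by rewrite lt_def Kn0 K0.
have := key K Kp.
have -> : K ^+ 2 / (2 * K) + K / 2 = K by field; rewrite gt_eqF.
by [].
Qed.

End Var.


Lemma meas_gdS {R : realType} {d : nat} {dZ} {Z : measurableType dZ}
  {dO} {O : measurableType dO} (n : nat) (zs : 'I_n -> O -> Z)
  (g : 'rV[R]_d -> Z -> 'rV[R]_d) (eta : R) :
  measurable_selection g -> (forall i, measurable_fun setT (zs i)) ->
  forall t j, measurable_fun setT (fun o => gd (emp_grad g (fun i => zs i o)) eta t ord0 j).
Proof.
move=> hmeas mz; elim=> [|t IH] j /=.
  by rewrite (_ : (fun _ => _) = (fun _ => 0)); [exact: measurable_cst|apply/funext => o; rewrite mxE].
rewrite (_ : (fun _ => _) = (fun o => gd (emp_grad g (fun i => zs i o)) eta t ord0 j -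
   eta * (n%:R^-1 * \sum_(i < n) g (gd (emp_grad g (fun i => zs i o)) eta t) (zs i o) ord0 j))); last first.
  by apply/funext => o; rewrite /emp_grad !mxE summxE.
apply: measurable_funB; first exact: IH.
apply: measurable_funM; first exact: measurable_cst.
apply: measurable_funM; first exact: measurable_cst.
apply: measurable_sum => i.
exact: (hmeas _ _ (fun o => gd (emp_grad g (fun i => zs i o)) eta t) (zs i) IH (mz i) j).
Qed.

Lemma meas_normv {R : realType} {d : nat} {dO} {O : measurableType dO}
  (u : O -> 'rV[R]_d) : (forall j, measurable_fun setT (fun o => u o ord0 j)) ->
  measurable_fun setT (fun o => normv (u o)).
Proof.
move=> hu; rewrite /normv /dotv.
apply: (measurableT_comp (continuous_measurable_fun (@sqrt_continuous R))).
by apply: measurable_sum => j; apply: measurable_funM.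
Qed.

Theorem lemma5p1 (R : realType) :
  exists C : R,
  forall (d : nat) (dZ : measure_display) (Z : measurableType dZ)
    (D : probability Z R)
    (f : 'rV[R]_d -> Z -> R) (g : 'rV[R]_d -> Z -> 'rV[R]_d) (L : R),
    0 <= L ->
    (forall z, convex_on_Rd (fun w => f w z)) ->
    (forall z, lipschitz_Rd L (fun w => f w z)) ->
    (forall w z, is_subgradient (fun u => f u z) w (g w z)) ->
    measurable_selection g ->
  forall (eta : R) (T : nat), 0 < eta ->
  forall (n : nat), (0 < n)%N ->
  forall (dO : measure_display) (O : measurableType dO) (P : probability O R)
    (zs : 'I_n -> O -> Z),
    iid_sample P D zs ->
  forall t : nat, (1 <= t <= T)%N ->
    (\int[P]_o (normv (gd (emp_grad g (fun i => zs i o)) eta t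
                       - gd (pop_grad D g) eta t))%:E
     <= (C * (eta * L * t%:R / Num.sqrt n%:R + eta * L * Num.sqrt t%:R))%:E)%E.
Proof.
exists 2 => d dZ Z D f g L L0 _ hlip hsub hmeas eta T eta0 n n0 dO O P zs Hiid t _.
have hgn : forall w z, normv (g w z) <= L.
  by move=> w z; exact: (subgrad_norm (fun u => f u z) L w (g w z) L0 (hlip z) (hsub w z)).
have hgm : forall z a b, 0 <= dotv (g a z - g b z) (a - b).
  by move=> z a b; exact: (subgrad_mono (fun u => f u z) a b _ _ (hsub a z) (hsub b z)).
pose wD s := gd (pop_grad D g) eta s.
pose X s o := normv (emp_grad g (fun i => zs i o) (wD s) - pop_grad D g (wD s)).
have hmz : forall i, measurable_fun setT (zs i) by move=> i; exact: (mzs Hiid).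
have hmh : forall s j, measurable_fun setT (fun z => g (wD s) z ord0 j).
  move=> s j; apply: (hmeas _ _ (fun _ => wD s) (fun z => z)).
    by move=> j'; exact: measurable_cst.
  exact: measurable_id.
have BX : forall s, BM (X s).
  by move=> s; exact: (BM_norm_e D P n zs Hiid n0 (g (wD s)) L L0 (hgn _) (hmh s)).
have EX : forall s, \int[P]_o X s o <= L / Num.sqrt n%:R.
  by move=> s; exact: (err_bound D P n zs Hiid n0 (g (wD s)) L L0 (hgn _) (hmh s)).
pose B o := 2 * eta * L * Num.sqrt t%:R + eta * \sum_(s < t) X s o.
have BB : BM B.
  apply: BM_D; first exact: BM_cst.
  apply: BM_M; first exact: BM_cst.
  by apply: BM_sum.
apply: le_trans (_ : (\int[P]_o (B o)%:E <= _)%E).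
  apply: ge0_le_integral => //.
  - by move=> o _; rewrite lee_fin normv_ge0.
  - apply/measurable_EFinP; apply: meas_normv => j.
    rewrite (_ : (fun _ => _) = (fun o => gd (emp_grad g (fun i => zs i o)) eta t ord0 j - wD t ord0 j)); last first.
      by apply/funext => o; rewrite !mxE.
    apply: measurable_funB; first exact: meas_gdS.
    exact: measurable_cst.
  - by case: BB => mB _; exact/measurable_EFinP.
  - move=> o _; rewrite lee_fin /B.
    apply: gd_diff => //.
      by move=> w; exact: emp_norm.
    exact: emp_mono.
rewrite (Rint_EFin P B BB) lee_fin /B.
rewrite Rint_D; [|exact: BM_cst|by apply: BM_M; [exact: BM_cst|apply: BM_sum]].
rewrite Rint_cst Rint_Zl; last by apply: BM_sum.
rewrite Rint_sum //.
have sn : 0 < Num.sqrt n%:R :> R by rewrite sqrtr_gt0 ltr0n.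
have hs : \sum_(s < t) \int[P]_o X s o <= t%:R * (L / Num.sqrt n%:R).
  apply: le_trans (_ : \sum_(s < t) (L / Num.sqrt n%:R) <= _).
    by apply: ler_sum => s _; exact: EX.
  by rewrite sumr_const card_ord mulr_natl.
have q0 : 0 <= t%:R * (L / Num.sqrt n%:R) by rewrite mulr_ge0 ?divr_ge0 ?ler0n // ltW.
have : eta * \sum_(s < t) \int[P]_o X s o <= eta * (t%:R * (L / Num.sqrt n%:R)).
  by rewrite ler_wpM2l // ltW.
have -> : eta * L * t%:R / Num.sqrt n%:R = eta * (t%:R * (L / Num.sqrt n%:R)) by ring.
have : 0 <= eta * (t%:R * (L / Num.sqrt n%:R)) by rewrite mulr_ge0 // ltW.
lra.
Qed.
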